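(* Let $A$ be a formula in which the bound variables are pairwise distinct and distinct from the free variables. If the sequent $\vdash A$ (with empty context) has a derivation in LJ$^{+}$, then it also has a derivation in LJB.
   Context: Minimal predicate logic: terms $t ::= x \mid f(t_1,\dots,t_n)$, formulas $A ::= P(t_1,\dots,t_n)\mid A\rightarrow A\mid \forall x\,A$. Positivity: atomic formulas are positive and negative; $A\rightarrow B$ is positive (resp. negative) if $A$ is negative (resp. positive) and $B$ positive (resp. negative); $\forall x\,A$ is positive if $A$ is positive, never negative. A sequent is positive if its context formulas are negative and its right-hand side positive; both calculi below are for positive sequents. LJ$^{+}$: sequents $\Gamma\vdash A$ with $\Gamma$ a finite multiset of formulas, formulas modulo $\alpha$-equivalence; rules (L$\rightarrow$) from $\Gamma, A_1\rightarrow\dots\rightarrow A_n\rightarrow P\vdash A_i$ ($i=1..n$, $n\ge0$) infer $\Gamma, A_1\rightarrow\dots\rightarrow A_n\rightarrow P\vdash P$, $P$ atomic; (R$\forall$) from $\Gamma\vdash A$ infer $\Gamma\vdash\forall x\,A$ if $x$ not free in $\Gamma$; (R$\rightarrow$) from $\Gamma,A\vdash B$ infer $\Gamma\vdash A\rightarrow B$. LJB: an LJB-context is a finite multiset of items; an item is a formula or $[\Gamma]_V$ ($V$ a finite set of variables bound by the bracket, $\Gamma$ an LJB-context); $FV([\Gamma]_V)=FV(\Gamma)\setminus V$. Cleaning rules (anywhere in a context, contexts being multisets): $[I,\Gamma]_V\longrightarrow I,[\Gamma]_V$ if $FV(I)\cap V=\emptyset$; $[\ ]_V\longrightarrow\emptyset$;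 $I\,I\longrightarrow I$. This system terminates; $\Gamma{\downarrow}$ denotes the normal form of $\Gamma$ obtained with a fixed arbitrary strategy. LJB rules apply only to LJB-sequents $\Gamma\vdash A$ with $\Gamma$ in normal form and in which, in each formula, bound variables are pairwise distinct and distinct from free variables; formulas are not identified modulo $\alpha$. Rules: (L$\rightarrow$) from $\Gamma'\vdash A_1,\dots,\Gamma'\vdash A_n$ infer $\Gamma\vdash P$, where $\Gamma=\Gamma_1,[\Gamma_2,[\dots\Gamma_{i-1},[\Gamma_i, A_1\rightarrow\dots\rightarrow A_n\rightarrow P]_{V_{i-1}}\dots]_{V_2}]_{V_1}$ ($i\ge1$), $\Gamma'=([\dots[[\Gamma_1]_{V_1},\Gamma_2]_{V_2},\dots,\Gamma_{i-1}]_{V_{i-1}},\Gamma_i,A_1\rightarrow\dots\rightarrow A_n\rightarrow P){\downarrow}$, $P$ atomic with no free variable in $V_1\cup\dots\cup V_{i-1}$; (R$\forall$) from $[\Gamma]_V{\downarrow}\vdash A$ infer $\Gamma\vdash\forall x\,A$, where $V$ is the set of all variables bound in $\forall x\,A$; (R$\rightarrow$) from $(\Gamma,A){\downarrow}\vdash B$ infer $\Gamma\vdash A\rightarrow B$. *)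

(* Defs.v *)
From Stdlib Require Import List Permutation Relations.
Import ListNotations.

Inductive term : Type :=
| Var (x : nat)
| Fn (f : nat) (ts : list term).

Inductive form : Type :=
| Atom (p : nat) (ts : list term)
| Imp (A B : form)
| All (x : nat) (A : form).

Inductive FreeT (x : nat) : term -> Prop :=
| FreeT_var : FreeT x (Var x)
| FreeT_fn f ts t : In t ts -> FreeT x t -> FreeT x (Fn f ts).

Fixpoint free (x : nat) (A : form) : Prop :=
  match A with
  | Atom _ ts => exists t, In t ts /\ FreeT x t
  | Imp A B => free x A \/ free x B
  | All y A => x <> y /\ free x A
  end.

Fixpoint bound (A : form) : list nat :=
  match A with
  | Atom _ _ => []
  | Imp A B => bound A ++ bound B
  | All x A => x :: bound A
  end.

Definition bvc (A : form) : Prop :=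
  NoDup (bound A) /\ (forall x, In x (bound A) -> ~ free x A).

Fixpoint pos (A : form) : Prop :=
  match A with
  | Atom _ _ => True
  | Imp A B => neg A /\ pos B
  | All _ A => pos A
  end
with neg (A : form) : Prop :=
  match A with
  | Atom _ _ => True
  | Imp A B => pos A /\ neg B
  | All _ _ => False
  end.

Definition chain (As : list form) (P : form) : form := fold_right Imp P As.

(** * Alpha-equivalence (bound variables compared by binder position). *)
Fixpoint idx (x : nat) (l : list nat) : option nat :=
  match l with
  | [] => None
  | y :: l' => if Nat.eqb x y then Some 0
               else match idx x l' with Some n => Some (S n) | None => None end
  end.

Inductive alphaT (l1 l2 : list nat) : term -> term -> Prop :=
| alphaT_var x y : idx x l1 = idx y l2 -> (idx x l1 = None -> x = y) ->
    alphaT l1 l2 (Var x) (Var y)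
| alphaT_fn f ts us : Forall2 (alphaT l1 l2) ts us -> alphaT l1 l2 (Fn f ts) (Fn f us).

Inductive alphaF : list nat -> list nat -> form -> form -> Prop :=
| alphaF_atom l1 l2 p ts us : Forall2 (alphaT l1 l2) ts us ->
    alphaF l1 l2 (Atom p ts) (Atom p us)
| alphaF_imp l1 l2 A B A' B' : alphaF l1 l2 A A' -> alphaF l1 l2 B B' ->
    alphaF l1 l2 (Imp A B) (Imp A' B')
| alphaF_all l1 l2 x y A B : alphaF (x :: l1) (y :: l2) A B ->
    alphaF l1 l2 (All x A) (All y B).

Definition alpha (A B : form) : Prop := alphaF [] [] A B.

(** * LJ+ : contexts are lists (read as multisets), formulas modulo alpha. *)
Inductive ljp : list form -> form -> Prop :=
| ljp_L Γ As p ts :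
    In (chain As (Atom p ts)) Γ ->
    (forall Ai, In Ai As -> ljp Γ Ai) ->
    ljp Γ (Atom p ts)
| ljp_Rall Γ x A :
    (forall B, In B Γ -> ~ free x B) ->
    ljp Γ A -> ljp Γ (All x A)
| ljp_Rimp Γ A B :
    ljp (A :: Γ) B -> ljp Γ (Imp A B)
| ljp_alpha Γ A A' : alpha A A' -> ljp Γ A -> ljp Γ A'
| ljp_alpha_ctx Γ Γ' A : Forall2 alpha Γ Γ' -> ljp Γ A -> ljp Γ' A.

(** Items: a formula, or a bracket [Γ]_V. *)
Inductive item : Type :=
| IF (A : form)
| IB (V : list nat) (G : list item).

Definition ctx := list item.

(** Equality of items as (nested) multisets, V read as a set. *)
Inductive item_eq : item -> item -> Prop :=
| ieq_F A : item_eq (IF A) (IF A)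
| ieq_B V V' G G' G'' :
    (forall x, In x V <-> In x V') ->
    Permutation G' G'' -> Forall2 item_eq G G'' ->
    item_eq (IB V G) (IB V' G').

Definition ctx_eq (G G' : ctx) : Prop :=
  exists G'', Permutation G' G'' /\ Forall2 item_eq G G''.

Inductive FreeI (x : nat) : item -> Prop :=
| FreeI_F A : free x A -> FreeI x (IF A)
| FreeI_B V G I : ~ In x V -> In I G -> FreeI x I -> FreeI x (IB V G).

Inductive OccF (A : form) : item -> Prop :=
| OccF_F : OccF A (IF A)
| OccF_B V G I : In I G -> OccF A I -> OccF A (IB V G).

Inductive cstep : ctx -> ctx -> Prop :=
| cs_pull G1 G2 V D1 D2 I :
    (forall x, In x V -> ~ FreeI x I) ->
    cstep (G1 ++ IB V (D1 ++ I :: D2) :: G2) (G1 ++ I :: IB V (D1 ++ D2) :: G2)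
| cs_empty G1 G2 V :
    cstep (G1 ++ IB V [] :: G2) (G1 ++ G2)
| cs_dup G1 G2 G3 I J :
    item_eq I J ->
    cstep (G1 ++ I :: G2 ++ J :: G3) (G1 ++ I :: G2 ++ G3)
| cs_in G1 G2 V D D' :
    cstep D D' -> cstep (G1 ++ IB V D :: G2) (G1 ++ IB V D' :: G2).

Definition normal (G : ctx) : Prop := forall G', ~ cstep G G'.

Definition nf_strategy (nf : ctx -> ctx) : Prop :=
  (forall G, exists G', clos_refl_trans ctx cstep G G' /\ ctx_eq G' (nf G)) /\
  (forall G, normal (nf G)) /\
  (forall G G', ctx_eq G G' -> ctx_eq (nf G) (nf G')).

Definition ljb_seq (G : ctx) (A : form) : Prop :=
  normal G /\ (forall I B, In I G -> OccF B I -> bvc B) /\ bvc A.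

(** [lfocus acc G F G' W]: G = G1,[G2,[...,[Gi,F]_{V_{i-1}}...]_{V2}]_{V1} (with acc
    the already reorganised outer part, initially empty), G' is
    [...[[G1]_{V1},G2]_{V2},...,G_{i-1}]_{V_{i-1}},Gi,F  (before normalisation),
    and W = V1 ∪ ... ∪ V_{i-1}. *)
Inductive lfocus : ctx -> ctx -> form -> ctx -> list nat -> Prop :=
| lf_here acc G F Gi :
    Permutation G (IF F :: Gi) ->
    lfocus acc G F (acc ++ Gi ++ [IF F]) []
| lf_deeper acc G F V D Gj res W :
    Permutation G (IB V D :: Gj) ->
    lfocus [IB V (acc ++ Gj)] D F res W ->
    lfocus acc G F res (V ++ W).

Inductive ljb (nf : ctx -> ctx) : ctx -> form -> Prop :=
| ljb_L G As p ts G0 W :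
    ljb_seq G (Atom p ts) ->
    lfocus [] G (chain As (Atom p ts)) G0 W ->
    (forall x, In x W -> ~ free x (Atom p ts)) ->
    (forall Ai, In Ai As -> ljb nf (nf G0) Ai) ->
    ljb nf G (Atom p ts)
| ljb_Rall G x A :
    ljb_seq G (All x A) ->
    ljb nf (nf [IB (bound (All x A)) G]) A ->
    ljb nf G (All x A)
| ljb_Rimp G A B :
    ljb_seq G (Imp A B) ->
    ljb nf (nf (G ++ [IF A])) B ->
    ljb nf G (Imp A B).

(* Main.v *)
Require Import Defs.
From Stdlib Require Import List Permutation Relations Arith Lia.
Import ListNotations.

Fixpoint term_ind' (P : term -> Prop) (Hv : forall x, P (Var x))
  (Hf : forall f ts, (forall t, In t ts -> P t) -> P (Fn f ts)) (t : term) : P t :=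
  match t with
  | Var x => Hv x
  | Fn f ts => Hf f ts ((fix go (l : list term) : forall u, In u l -> P u :=
       match l with
       | [] => fun u H => False_ind _ H
       | c :: l' => fun u H => match H with
                   | or_introl E => eq_ind c P (term_ind' P Hv Hf c) u E
                   | or_intror H' => go l' u H' end
       end) ts)
  end.

Inductive aT (r : nat -> nat) (l1 l2 : list nat) : term -> term -> Prop :=
| aT_var x y : idx x l1 = idx y l2 -> (idx x l1 = None -> x = r y) ->
    aT r l1 l2 (Var x) (Var y)
| aT_fn f ts us : Forall2 (aT r l1 l2) ts us -> aT r l1 l2 (Fn f ts) (Fn f us).

Inductive aF (r : nat -> nat) : list nat -> list nat -> form -> form -> Prop :=
| aF_atom l1 l2 p ts us : Forall2 (aT r l1 l2) ts us -> aF r l1 l2 (Atom p ts) (Atom p us)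
| aF_imp l1 l2 A B A' B' : aF r l1 l2 A A' -> aF r l1 l2 B B' ->
    aF r l1 l2 (Imp A B) (Imp A' B')
| aF_all l1 l2 x y A B : aF r (x :: l1) (y :: l2) A B ->
    aF r l1 l2 (All x A) (All y B).

Lemma Forall2_In_l {A B} (R : A -> B -> Prop) l1 l2 a :
  Forall2 R l1 l2 -> In a l1 -> exists b, In b l2 /\ R a b.
Proof.
  induction 1; simpl; [tauto|]. intros [<-|H1].
  - eauto.
  - destruct (IHForall2 H1) as (b & ? & ?); eauto.
Qed.

Lemma Forall2_In_r {A B} (R : A -> B -> Prop) l1 l2 b :
  Forall2 R l1 l2 -> In b l2 -> exists a, In a l1 /\ R a b.
Proof.
  induction 1; simpl; [tauto|]. intros [<-|H1].
  - eauto.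
  - destruct (IHForall2 H1) as (a & ? & ?); eauto.
Qed.

Lemma Forall2_compose {A B C} (P : A -> B -> Prop) (Q : B -> C -> Prop) (R : A -> C -> Prop)
  l1 l2 l3 : Forall2 P l1 l2 -> Forall2 Q l2 l3 ->
  (forall a b c, In a l1 -> P a b -> Q b c -> R a c) -> Forall2 R l1 l3.
Proof.
  intros H; revert l3; induction H; intros l3 H2 HR; inversion H2; subst; constructor.
  - eapply HR; eauto. left; auto.
  - apply IHForall2; auto. intros; eapply HR; eauto. right; auto.
Qed.

Lemma Forall2_and {A B} (P Q : A -> B -> Prop) l1 l2 :
  Forall2 P l1 l2 -> Forall2 Q l1 l2 -> Forall2 (fun a b => P a b /\ Q a b) l1 l2.
Proof. induction 1; intros H2; inversion H2; subst; constructor; auto. Qed.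

Lemma aT_compose r l1 l2 l3 t u w :
  alphaT l1 l2 t u -> aT r l2 l3 u w -> aT r l1 l3 t w.
Proof.
  revert l1 l2 l3 u w. induction t as [x|f ts IH] using term_ind'; intros l1 l2 l3 u w H1 H2.
  - inversion H1 as [x' y E1 E2|]; subst. inversion H2 as [y' z E3 E4|]; subst.
    constructor; [congruence|].
    intro E. rewrite (E2 E). apply E4. congruence.
  - inversion H1; subst. inversion H2; subst. constructor.
    eapply Forall2_compose; eauto.
Qed.

Lemma aF_compose r l1 l2 A B : alphaF l1 l2 A B -> forall l3 C, aF r l2 l3 B C -> aF r l1 l3 A C.
Proof.
  induction 1; intros l3 C HC; inversion HC; subst; constructor; eauto.
  eapply Forall2_compose; eauto. intros; eapply aT_compose; eauto.
Qed.

Lemma aT_refl l t : aT (fun v => v) l l t t.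
Proof.
  induction t as [x|f ts IH] using term_ind'; constructor; auto.
  induction ts; constructor; auto. apply IH; left; auto. apply IHts; intros; apply IH; right; auto.
Qed.

Lemma aF_refl A : forall l, aF (fun v => v) l l A A.
Proof.
  induction A; intros; constructor; auto.
  induction ts; constructor; auto. apply aT_refl.
Qed.

Lemma idx_Some x l n : idx x l = Some n -> In x l /\ n < length l.
Proof.
  revert n; induction l as [|y l IH]; simpl; intros n H; [discriminate|].
  destruct (Nat.eqb_spec x y). subst. inversion H; subst; split; auto; lia.
  destruct (idx x l) eqn:E; inversion H; subst. destruct (IH _ eq_refl). split; auto; lia.
Qed.

Lemma idx_notin x l : ~ In x l -> idx x l = None.
Proof.
  induction l as [|y l IH]; simpl; intros H; auto.
  destruct (Nat.eqb_spec x y). subst; exfalso; auto.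
  rewrite IH; auto.
Qed.

Lemma idx_None x l : idx x l = None <-> ~ In x l.
Proof.
  split; [|apply idx_notin]. intros H Hin.
  induction l as [|y l IH]; simpl in *; auto.
  destruct (Nat.eqb_spec x y). discriminate.
  destruct (idx x l) eqn:E; [discriminate|]. destruct Hin; [congruence|auto].
Qed.

Lemma idx_app1 x l a : idx x (l ++ [a]) =
  match idx x l with Some n => Some n | None => if Nat.eqb x a then Some (length l) else None end.
Proof.
  induction l as [|y l IH]; simpl. destruct (Nat.eqb x a); auto.
  destruct (Nat.eqb x y); auto. rewrite IH. destruct (idx x l); auto. destruct (Nat.eqb x a); auto.
Qed.

Definition upd (r : nat -> nat) (b a : nat) : nat -> nat := fun v => if Nat.eqb v b then a else r v.

Lemma aT_bind r l1 l2 a b t u : length l1 = length l2 ->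
  aT r (l1 ++ [a]) (l2 ++ [b]) t u -> aT (upd r b a) l1 l2 t u.
Proof.
  intros Hlen. revert u. induction t as [x|f ts IH] using term_ind'; intros u H.
  - inversion H as [x' y H2 H3|]; subst.
    rewrite !idx_app1 in H2. rewrite idx_app1 in H3.
    constructor.
    + destruct (idx x l1) eqn:E1, (idx y l2) eqn:E2; auto.
      * destruct (Nat.eqb y b); inversion H2; subst. apply idx_Some in E1. lia.
      * destruct (Nat.eqb x a); inversion H2; subst. apply idx_Some in E2. lia.
    + intros E1. rewrite E1 in H2, H3. unfold upd.
      destruct (idx y l2) eqn:E2.
      * destruct (Nat.eqb x a); inversion H2; subst. apply idx_Some in E2. lia.
      * destruct (Nat.eqb_spec x a), (Nat.eqb_spec y b); subst; try discriminate; auto.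
  - inversion H as [|f' ts' us H2]; subst. constructor. induction H2; constructor.
    + apply IH; auto. left; auto.
    + apply IHForall2. intros; apply IH; auto. right; auto. constructor; auto.
Qed.

Lemma aF_bind r A B : forall l1 l2 a b, length l1 = length l2 ->
  aF r (l1 ++ [a]) (l2 ++ [b]) A B -> aF (upd r b a) l1 l2 A B.
Proof.
  revert B; induction A; intros B l1 l2 a b Hl H; inversion H; subst; constructor.
  - eapply Forall2_impl; [|eassumption]. intros; apply aT_bind; auto.
  - eapply IHA1; eauto.
  - eapply IHA2; eauto.
  - apply (IHA _ (x :: l1) (y :: l2) a b); simpl; auto.
Qed.

Lemma aT_free r l1 l2 t u v : aT r l1 l2 t u -> FreeT v u -> ~ In v l2 ->
  FreeT (r v) t /\ ~ In (r v) l1.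
Proof.
  revert u. induction t as [x|f ts IH] using term_ind'; intros u H Hf Hn.
  - inversion H as [x' y E1 E2|]; subst.
    inversion Hf; subst. apply idx_notin in Hn. rewrite Hn in E1.
    rewrite E2 by auto. split. constructor. apply idx_None; auto. rewrite <- (E2 E1); auto.
  - inversion H as [|f' ts' us E1]; subst.
    inversion Hf as [|f'' ts'' t' Hin Ht']; subst. destruct (Forall2_In_r _ _ _ _ E1 Hin) as (t0 & Ht0 & Ha).
    destruct (IH t0 Ht0 t' Ha Ht' Hn). split; auto. econstructor; eauto.
Qed.

Lemma aF_free r l1 l2 A B v : aF r l1 l2 A B -> free v B -> ~ In v l2 ->
  free (r v) A /\ ~ In (r v) l1.
Proof.
  intros H; revert v; induction H; simpl; intros v Hf Hn.
  - destruct Hf as (u & Hu & Hfu). destruct (Forall2_In_r _ _ _ _ H Hu) as (t & Ht & Ha).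
    destruct (aT_free _ _ _ _ _ _ Ha Hfu Hn). split; eauto.
  - destruct Hf as [Hf|Hf]; [destruct (IHaF1 v Hf Hn)|destruct (IHaF2 v Hf Hn)]; auto.
  - destruct Hf as [Hne Hf]. destruct (IHaF v Hf) as [H1 H2].
    + simpl; intros [|]; auto.
    + simpl in H2. split; [split|]; auto.
Qed.

Lemma aT_nil_eq r1 r2 t u1 u2 : aT r1 [] [] t u1 -> aT r2 [] [] t u2 ->
  (forall v1 v2, FreeT v1 u1 -> FreeT v2 u2 -> r1 v1 = r2 v2 -> v1 = v2) -> u1 = u2.
Proof.
  revert u1 u2. induction t as [x|f ts IH] using term_ind'; intros u1 u2 H1 H2 Hi.
  - inversion H1 as [x' y1 E1 E2|]; subst; inversion H2 as [x'' y2 E3 E4|]; subst.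
    simpl in *. f_equal. apply Hi; try constructor. rewrite <- E2, <- E4 by auto. auto.
  - inversion H1 as [|f' ts' us1 E1]; subst; inversion H2 as [|f'' ts'' us2 E2]; subst.
    f_equal. clear H1 H2. revert us1 us2 E1 E2 Hi. induction ts; intros us1 us2 E1 E2 Hi;
    inversion E1; subst; inversion E2; subst; auto. f_equal.
    + apply (IH a); [left; auto| |auto|]; auto. intros; apply Hi; auto; econstructor; eauto; left; auto.
    + apply IHts; auto.
      * intros t Ht; apply IH; right; auto.
      * intros v1 v2 F1 F2; inversion F1; inversion F2; subst; apply Hi;
        econstructor; eauto; right; auto.
Qed.

Lemma aT_nil_same r1 r2 t u x : aT r1 [] [] t u -> aT r2 [] [] t u -> FreeT x u -> r1 x = r2 x.
Proof.
  revert t. induction u as [y|f us IH] using term_ind'; intros t H1 H2 Hf.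
  - inversion H1 as [x1 y1 E1 E2|]; subst; inversion H2 as [x2 y2 E3 E4|]; subst.
    inversion Hf; subst. rewrite <- E2, <- E4; auto.
  - inversion H1 as [|f1 ts1 us1 E1]; subst; inversion H2 as [|f2 ts2 us2 E2]; subst.
    inversion Hf as [|f3 ts3 t3 Hin Ht3]; subst. pose proof (Forall2_and _ _ _ _ E1 E2) as HH.
    destruct (Forall2_In_r _ _ _ _ HH Hin) as (t' & Ht' & Ha1 & Ha2).
    eapply IH; eauto.
Qed.

Lemma Forall2_aT_nil_eq r1 r2 ts us1 us2 : Forall2 (aT r1 [] []) ts us1 -> Forall2 (aT r2 [] []) ts us2 ->
  (forall v1 v2, (exists u, In u us1 /\ FreeT v1 u) -> (exists u, In u us2 /\ FreeT v2 u) -> r1 v1 = r2 v2 -> v1 = v2) -> us1 = us2.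
Proof.
  intros H1; revert us2; induction H1; intros us2 H2 Hi; inversion H2; subst; auto.
  f_equal.
  - eapply aT_nil_eq; eauto. intros; apply Hi; eauto; eexists; split; eauto; left; auto.
  - apply IHForall2; auto. intros v1 v2 (u1 & ? & ?) (u2 & ? & ?); apply Hi; eexists; split; eauto; right; auto.
Qed.

Lemma Forall2_aT_nil_same r1 r2 ts us x : Forall2 (aT r1 [] []) ts us -> Forall2 (aT r2 [] []) ts us ->
  (exists u, In u us /\ FreeT x u) -> r1 x = r2 x.
Proof.
  intros H1 H2 (u & Hu & Hf). pose proof (Forall2_and _ _ _ _ H1 H2) as HH.
  destruct (Forall2_In_r _ _ _ _ HH Hu) as (t & _ & Ha1 & Ha2). eapply aT_nil_same; eauto.
Qed.

Lemma aF_chain r As' P' F : aF r [] [] (chain As' P') F ->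
  exists As P, F = chain As P /\ Forall2 (aF r [] []) As' As /\ aF r [] [] P' P.
Proof.
  revert F; induction As' as [|A As' IH]; simpl; intros F H.
  - exists [], F; simpl; auto.
  - inversion H as [| l1 l2 A0 B0 A1 B1 HA HB | ]; subst. destruct (IH _ HB) as (As & P & -> & H1 & H2).
    exists (A1 :: As), P; simpl; auto.
Qed.

Lemma free_chain_P v As P : free v P -> free v (chain As P).
Proof. induction As; simpl; auto. Qed.

Lemma free_chain_A v As P A : In A As -> free v A -> free v (chain As P).
Proof. induction As; simpl; intros Hin Hf; [contradiction|]. destruct Hin as [<-|H]; auto. Qed.

Lemma bvc_imp A B : bvc (Imp A B) -> bvc A /\ bvc B.
Proof.
  unfold bvc; simpl. intros [Hn Hf]. pose proof (NoDup_app_remove_r _ _ Hn) as H1; pose proof (NoDup_app_remove_l _ _ Hn) as H2.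
  split; split; auto; intros x Hx Hfx; apply (Hf x); simpl; auto; apply in_or_app; auto.
Qed.

Lemma bvc_all x A : bvc (All x A) -> bvc A.
Proof.
  unfold bvc; simpl. intros [Hn Hf]. inversion Hn; subst. split; auto.
  intros y Hy Hfy. apply (Hf y); auto. split; auto. intros ->; auto.
Qed.

Lemma bvc_chain As P A : bvc (chain As P) -> In A As -> bvc A.
Proof.
  induction As; simpl; [tauto|]. intros H [<-|Hin]; apply bvc_imp in H; destruct H; auto.
Qed.

Lemma bvc_free A v : bvc A -> free v A -> ~ In v (bound A).
Proof. intros [_ H] Hf Hin. apply (H v); auto. Qed.

(** * Annotated contexts *)
Inductive aitem : Type :=
| AF (F : form) (rs : list (nat -> nat))
| AB (V : list nat) (T : list aitem).

Fixpoint aitem_ind' (P : aitem -> Prop) (HF : forall F rs, P (AF F rs))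
  (HB : forall V T, (forall a, In a T -> P a) -> P (AB V T)) (a : aitem) : P a :=
  match a with
  | AF F rs => HF F rs
  | AB V T => HB V T ((fix go (l : list aitem) : forall b, In b l -> P b :=
       match l with
       | [] => fun b H => False_ind _ H
       | c :: l' => fun b H => match H with
                   | or_introl E => eq_ind c P (aitem_ind' P HF HB c) b E
                   | or_intror H' => go l' b H' end
       end) T)
  end.

Fixpoint erase (a : aitem) : item :=
  match a with AF F _ => IF F | AB V T => IB V (map erase T) end.

Inductive view := mkv (F : form) (r : nat -> nat) (W : list nat).
Definition pre (V : list nat) (x : view) : view :=
  match x with mkv F r W => mkv F r (V ++ W) end.

Fixpoint views (a : aitem) : list view :=
  match a with
  | AF F rs => map (fun r => mkv F r []) rs
  | AB V T => map (pre V) (flat_map views T)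
  end.
Definition vs (T : list aitem) := flat_map views T.

Definition cond (x y : view) : Prop :=
  match x, y with mkv F1 r1 W1, mkv F2 r2 W2 =>
    forall v1 v2, free v1 F1 -> free v2 F2 -> r1 v1 = r2 v2 ->
      v1 = v2 /\ ~ In v1 W1 /\ ~ In v1 W2 end.

Definition icompat (a b : aitem) : Prop :=
  forall x y, In x (views a) -> In y (views b) -> cond x y.

Inductive CI : aitem -> Prop :=
| CI_F F rs : icompat (AF F rs) (AF F rs) -> CI (AF F rs)
| CI_B V T : (forall a, In a T -> CI a) -> ForallOrdPairs icompat T -> CI (AB V T).

Definition compatL (T : list aitem) := (forall a, In a T -> CI a) /\ ForallOrdPairs icompat T.

Definition svw (x y : view) : Prop :=
  match x, y with mkv F1 r1 W1, mkv F2 r2 W2 =>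
    r1 = r2 /\ forall v, free v F1 -> free v F2 /\ (In v W1 -> In v W2) end.

Definition fof (x : view) := match x with mkv F _ _ => F end.
Definition sv (x y : view) : Prop := svw x y /\ fof x = fof y.

Definition BackL (L' L : list view) := forall x, In x L' -> exists y, In y L /\ sv x y.
Definition CovL (L L' : list view) := forall F r W, In (mkv F r W) L -> exists W', In (mkv F r W') L'.

Lemma in_views_AB x V T : In x (views (AB V T)) <-> exists x0 a, In a T /\ In x0 (views a) /\ x = pre V x0.
Proof.
  simpl. rewrite in_map_iff. split.
  - intros (x0 & <- & H). apply in_flat_map in H as (a & ? & ?). eauto.
  - intros (x0 & a & ? & ? & ->). exists x0; split; auto. apply in_flat_map; eauto.
Qed.

Lemma in_vs x T : In x (vs T) <-> exists a, In a T /\ In x (views a).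
Proof. unfold vs. apply in_flat_map. Qed.

Lemma vs_app T1 T2 : vs (T1 ++ T2) = vs T1 ++ vs T2.
Proof. unfold vs. apply flat_map_app. Qed.

Lemma cond_sym x y : cond x y -> cond y x.
Proof.
  destruct x as [F1 r1 W1], y as [F2 r2 W2]; simpl. intros H v1 v2 H1 H2 E.
  destruct (H v2 v1 H2 H1 (eq_sym E)) as (-> & ? & ?); auto.
Qed.

Lemma icompat_sym a b : icompat a b -> icompat b a.
Proof. unfold icompat; intros H x y Hx Hy; apply cond_sym; auto. Qed.

Lemma cond_mono_w x y x' y' : cond x y -> svw x' x -> svw y' y -> cond x' y'.
Proof.
  destruct x as [F1 r1 W1], y as [F2 r2 W2], x' as [F1' r1' W1'], y' as [F2' r2' W2']; simpl.
  intros H (-> & H1) (-> & H2) v1 v2 Hf1 Hf2 E.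
  destruct (H1 v1 Hf1) as [Hf1' HW1]. destruct (H2 v2 Hf2) as [Hf2' HW2].
  destruct (H v1 v2 Hf1' Hf2' E) as (<- & N1 & N2). split; auto.
Qed.

Lemma cond_mono x y x' y' : cond x y -> sv x' x -> sv y' y -> cond x' y'.
Proof. intros H [H1 _] [H2 _]; eapply cond_mono_w; eauto. Qed.

Lemma sv_refl x : sv x x.
Proof. destruct x; split; simpl; auto. Qed.

Lemma sv_trans x y z : sv x y -> sv y z -> sv x z.
Proof.
  destruct x, y, z; unfold sv; simpl. intros ((-> & H1) & E1) ((-> & H2) & E2). split; [split|congruence]; auto.
  intros v Hv. destruct (H1 v Hv). destruct (H2 v); auto.
Qed.

Lemma sv_pre V x y : sv x y -> sv (pre V x) (pre V y).
Proof.
  destruct x, y; unfold sv; simpl. intros ((-> & H) & E). split; [split|auto]; auto. intros v Hv; destruct (H v Hv); split; auto.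
  intros Hi; apply in_app_or in Hi; apply in_or_app; tauto.
Qed.

Lemma sv_pre_r V x : sv x (pre V x).
Proof. destruct x; unfold sv; simpl; split; [split|]; auto. intros; split; auto. intros; apply in_or_app; auto. Qed.

Lemma icompat_backL a' b' L1 L2 : BackL (views a') L1 -> BackL (views b') L2 ->
  (forall x y, In x L1 -> In y L2 -> cond x y) -> icompat a' b'.
Proof.
  intros H1 H2 H x y Hx Hy. destruct (H1 x Hx) as (x0 & ? & ?). destruct (H2 y Hy) as (y0 & ? & ?).
  eapply cond_mono; eauto.
Qed.

Lemma icompat_back a b a' b' : icompat a b -> BackL (views a') (views a) -> BackL (views b') (views b) ->
  icompat a' b'.
Proof. intros; eapply icompat_backL; eauto. Qed.

Lemma FOP_perm {A} (R : A -> A -> Prop) (Hs : forall a b, R a b -> R b a) l l' :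
  Permutation l l' -> ForallOrdPairs R l -> ForallOrdPairs R l'.
Proof.
  induction 1 as [|x l l' HP IH|x y l|l l' l'' HP1 IH1 HP2 IH2]; intros HF; auto.
  - inversion HF as [|a l0 HA HB]; subst. constructor; auto. eapply Permutation_Forall; eauto.
  - inversion HF as [|a l0 HA HB]; subst. inversion HB as [|a' l1 HC HD]; subst.
    inversion HA; subst.
    constructor; [constructor; auto|constructor; auto].
Qed.

Lemma FOP_app {A} (R : A -> A -> Prop) l1 l2 :
  ForallOrdPairs R (l1 ++ l2) <-> ForallOrdPairs R l1 /\ ForallOrdPairs R l2 /\
    (forall a b, In a l1 -> In b l2 -> R a b).
Proof.
  induction l1 as [|a l1 IH]; simpl.
  - split; [intros; repeat split; auto; [constructor|tauto]|tauto].
  - split.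
    + intros H; inversion H; subst. apply IH in H3 as (H3 & H4 & H5).
      apply Forall_app in H2 as [H6 H7].
      split; [constructor; auto|split; auto]. intros x y [<-|Hx] Hy; auto.
      rewrite Forall_forall in H7; auto.
    + intros (H1 & H2 & H3). inversion H1; subst. constructor.
      * apply Forall_app; split; auto. rewrite Forall_forall; intros; apply H3; auto.
      * apply IH; repeat split; auto.
Qed.

Lemma compatL_perm T T' : Permutation T T' -> compatL T -> compatL T'.
Proof.
  intros HP [H1 H2]; split.
  - intros a Ha; apply H1; eapply Permutation_in; [symmetry|]; eauto.
  - eapply FOP_perm; eauto. apply icompat_sym.
Qed.

Lemma compatL_app T1 T2 : compatL (T1 ++ T2) <-> compatL T1 /\ compatL T2 /\
  (forall a b, In a T1 -> In b T2 -> icompat a b).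
Proof.
  unfold compatL. rewrite FOP_app. split.
  - intros (H1 & H2 & H3 & H4). repeat split; auto; intros; apply H1; apply in_or_app; auto.
  - intros ((H1 & H2) & (H3 & H4) & H5). repeat split; auto.
    intros a Ha; apply in_app_or in Ha as [|]; auto.
Qed.

Lemma compatL_cons a T : compatL (a :: T) <-> CI a /\ (forall b, In b T -> icompat a b) /\ compatL T.
Proof.
  unfold compatL; split.
  - intros (H1 & H2). inversion H2; subst. rewrite Forall_forall in H3.
    repeat split; auto. apply H1; left; auto. intros; apply H1; right; auto.
  - intros (H1 & H2 & H3 & H4). split.
    + intros b [<-|Hb]; auto.
    + constructor; auto. rewrite Forall_forall; auto.
Qed.

Lemma CI_AB_iff V T : CI (AB V T) <-> compatL T.
Proof. split. intros H; inversion H; subst; split; auto. intros [H1 H2]; constructor; auto. Qed.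

Lemma CI_AF_iff F rs : CI (AF F rs) <-> icompat (AF F rs) (AF F rs).
Proof. split. intros H; inversion H; subst; auto. intros; constructor; auto. Qed.

Lemma compatL_nil : compatL [].
Proof. split; [intros _ []|constructor]. Qed.

Lemma compatL_replace E T T' : compatL (E ++ T) -> compatL T' -> BackL (vs T') (vs T) ->
  compatL (E ++ T').
Proof.
  rewrite !compatL_app. intros (H1 & H2 & H3) H4 H5. split; [auto|split; [auto|]].
  intros a b Ha Hb x y Hx Hy.
  assert (Hy' : In y (vs T')) by (apply in_vs; eauto).
  destruct (H5 y Hy') as (y0 & Hy0 & Hs). apply in_vs in Hy0 as (b0 & Hb0 & Hy0).
  eapply cond_mono; [apply (H3 a b0); eauto| apply sv_refl | eauto].
Qed.

Lemma BackL_incl L' L : (forall x, In x L' -> In x L) -> BackL L' L.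
Proof. intros H x Hx; exists x; split; auto; apply sv_refl. Qed.

Lemma CovL_incl L L' : (forall x, In x L -> In x L') -> CovL L L'.
Proof. intros H F r W Hx; exists W; auto. Qed.

Lemma BackL_trans L1 L2 L3 : BackL L1 L2 -> BackL L2 L3 -> BackL L1 L3.
Proof.
  intros H1 H2 x Hx. destruct (H1 x Hx) as (y & Hy & S1). destruct (H2 y Hy) as (z & Hz & S2).
  exists z; split; auto; eapply sv_trans; eauto.
Qed.

Lemma CovL_trans L1 L2 L3 : CovL L1 L2 -> CovL L2 L3 -> CovL L1 L3.
Proof.
  intros H1 H2 F r W Hx. destruct (H1 F r W Hx) as (W' & Hy). eapply H2; eauto.
Qed.

Lemma vs_perm T T' : Permutation T T' -> Permutation (vs T) (vs T').
Proof. apply Permutation_flat_map. Qed.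

Definition Rel T T' := compatL T -> compatL T' /\ BackL (vs T') (vs T) /\ CovL (vs T) (vs T').

Lemma Rel_perm T T' T0 T0' : Permutation T T0 -> Permutation T' T0' -> Rel T0 T0' -> Rel T T'.
Proof.
  intros P1 P2 H HC. destruct (H (compatL_perm _ _ P1 HC)) as (H1 & H2 & H3).
  pose proof (vs_perm _ _ P1) as Q1. pose proof (vs_perm _ _ P2) as Q2.
  split; [|split].
  - eapply compatL_perm; [symmetry|]; eauto.
  - eapply BackL_trans; [|eapply BackL_trans; [apply H2|]]; apply BackL_incl; intros.
    + eapply Permutation_in; eauto.
    + eapply Permutation_in; [symmetry|]; eauto.
  - eapply CovL_trans; [|eapply CovL_trans; [apply H3|]]; apply CovL_incl; intros.
    + eapply Permutation_in; eauto.
    + eapply Permutation_in; [symmetry|]; eauto.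
Qed.

Lemma Rel_trans T1 T2 T3 : Rel T1 T2 -> Rel T2 T3 -> Rel T1 T3.
Proof.
  intros H1 H2 HC. destruct (H1 HC) as (A1 & B1 & C1). destruct (H2 A1) as (A2 & B2 & C2).
  split; [|split]; auto. eapply BackL_trans; eauto. eapply CovL_trans; eauto.
Qed.

Lemma Rel_refl T : Rel T T.
Proof. intros H; split; [|split]; auto. apply BackL_incl; auto. apply CovL_incl; auto. Qed.

Lemma views_AB_perm V T T' : Permutation T T' -> Permutation (views (AB V T)) (views (AB V T')).
Proof. intros; simpl; apply Permutation_map, Permutation_flat_map; auto. Qed.

Lemma Rel_AB_perm V TD TD' R : Permutation TD TD' -> Rel (AB V TD :: R) (AB V TD' :: R).
Proof.
  intros HP HC. pose proof (views_AB_perm V _ _ HP) as HV.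
  assert (HB : BackL (vs (AB V TD' :: R)) (vs (AB V TD :: R))).
  { apply BackL_incl. simpl. intros x Hx; apply in_app_or in Hx as [Hx|Hx]; apply in_or_app; auto.
    left; eapply Permutation_in; [symmetry|]; eauto. }
  split; [|split]; auto.
  - apply compatL_cons in HC as (H1 & H2 & H3). apply compatL_cons; split; [|split]; auto.
    + apply CI_AB_iff. apply CI_AB_iff in H1. eapply compatL_perm; eauto.
    + intros b Hb. eapply icompat_back; [apply (H2 b Hb)| |apply BackL_incl; auto].
      apply BackL_incl; intros; eapply Permutation_in; [symmetry|]; eauto.
  - apply CovL_incl. simpl. intros x Hx; apply in_app_or in Hx as [Hx|Hx]; apply in_or_app; auto.
    left; eapply Permutation_in; eauto.
Qed.

Lemma FreeI_view a : forall F r W v, In (mkv F r W) (views a) -> free v F -> ~ In v W ->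
  FreeI v (erase a).
Proof.
  induction a as [F rs|V T IH] using aitem_ind'; intros F0 r W v Hx Hf Hn.
  - simpl in Hx. apply in_map_iff in Hx as (r' & E & _). inversion E; subst. constructor; auto.
  - apply in_views_AB in Hx as (x0 & a & Ha & Hx0 & E). destruct x0 as [F1 r1 W1].
    simpl in E. inversion E; subst. simpl. econstructor.
    + intro; apply Hn; apply in_or_app; auto.
    + apply in_map; eauto.
    + eapply IH; eauto. intro; apply Hn; apply in_or_app; auto.
Qed.

Lemma Rel_pull V aI TD R : (forall x, In x V -> ~ FreeI x (erase aI)) ->
  Rel (AB V (aI :: TD) :: R) (aI :: AB V TD :: R).
Proof.
  intros HV HC. apply compatL_cons in HC as (H1 & H2 & H3).
  apply CI_AB_iff in H1. apply compatL_cons in H1 as (H4 & H5 & H6).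
  split; [|split].
  - apply compatL_cons; split; [|split]; auto.
    + intros b [<-|Hb].
      * intros x y Hx Hy. apply in_views_AB in Hy as (y0 & t & Ht & Hy0 & ->).
        pose proof (H5 t Ht x y0 Hx Hy0) as Hc.
        destruct x as [F1 r1 W1], y0 as [F2 r2 W2]; simpl in *.
        intros v1 v2 Hf1 Hf2 E. destruct (Hc v1 v2 Hf1 Hf2 E) as (<- & N1 & N2).
        split; [|split]; auto. intros Hi; apply in_app_or in Hi as [Hi|Hi]; auto.
        apply (HV v1 Hi). eapply FreeI_view; eauto.
      * intros x y Hx Hy. eapply cond_mono; [apply (H2 b Hb (pre V x) y)| |apply sv_refl]; auto.
        -- apply in_views_AB. exists x, aI; split; [left|]; auto.
        -- apply sv_pre_r.
    + apply compatL_cons; split; [|split]; auto.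
      * apply CI_AB_iff; auto.
      * intros b Hb. eapply icompat_back; [apply (H2 b Hb)| |apply BackL_incl; auto].
        apply BackL_incl. intros x Hx. apply in_views_AB in Hx as (x0 & t & Ht & Hx0 & ->).
        apply in_views_AB. exists x0, t; split; [right|]; auto.
  - intros x Hx. simpl in Hx. apply in_app_or in Hx as [Hx|Hx].
    + exists (pre V x); split; [|apply sv_pre_r]. simpl. apply in_or_app; left.
      apply in_map. apply in_or_app; auto.
    + exists x; split; [|apply sv_refl]. simpl. apply in_app_or in Hx as [Hx|Hx]; apply in_or_app; auto.
      left. apply in_map_iff in Hx as (x0 & <- & Hx0). apply in_map. apply in_or_app; auto.
  - intros F r W Hx. simpl in Hx. apply in_app_or in Hx as [Hx|Hx].
    + apply in_map_iff in Hx as ([F0 r0 W0] & E & Hx0). simpl in E; inversion E; subst.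
      apply in_app_or in Hx0 as [Hx0|Hx0].
      * exists W0. simpl. apply in_or_app; auto.
      * exists (V ++ W0). simpl. apply in_or_app; right; apply in_or_app; left.
        apply in_map_iff. exists (mkv F r W0); split; auto.
    + exists W. simpl. apply in_or_app; right; apply in_or_app; auto.
Qed.

Lemma sv_pre2 V' V x y : (forall v, In v V' -> In v V) -> sv x y -> sv (pre V' x) (pre V y).
Proof.
  destruct x, y; unfold sv; simpl. intros HV ((-> & H) & E). split; [split|auto]; auto. intros v Hv; destruct (H v Hv); split; auto.
  intros Hi; apply in_app_or in Hi; apply in_or_app. destruct Hi; auto.
Qed.

Lemma BackL_AB V' V TD' TD : (forall v, In v V' -> In v V) -> BackL (vs TD') (vs TD) ->
  BackL (views (AB V' TD')) (views (AB V TD)).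
Proof.
  intros HV HB x Hx. simpl in Hx. apply in_map_iff in Hx as (x0 & <- & Hx0).
  destruct (HB x0 Hx0) as (y0 & Hy0 & S). exists (pre V y0); split.
  - simpl; apply in_map; auto.
  - apply sv_pre2; auto.
Qed.

Lemma CovL_AB V' V TD' TD : CovL (vs TD) (vs TD') -> CovL (views (AB V TD)) (views (AB V' TD')).
Proof.
  intros HC F r W Hx. simpl in Hx. apply in_map_iff in Hx as ([F0 r0 W0] & E & Hx0).
  simpl in E; inversion E; subst. destruct (HC F r W0 Hx0) as (W' & HW').
  exists (V' ++ W'). simpl. apply in_map_iff. exists (mkv F r W'); auto.
Qed.

Lemma BackL_app L1 L2 M1 M2 : BackL L1 M1 -> BackL L2 M2 -> BackL (L1 ++ L2) (M1 ++ M2).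
Proof.
  intros H1 H2 x Hx. apply in_app_or in Hx as [Hx|Hx].
  - destruct (H1 x Hx) as (y & ? & ?); exists y; split; auto; apply in_or_app; auto.
  - destruct (H2 x Hx) as (y & ? & ?); exists y; split; auto; apply in_or_app; auto.
Qed.

Lemma CovL_app L1 L2 M1 M2 : CovL L1 M1 -> CovL L2 M2 -> CovL (L1 ++ L2) (M1 ++ M2).
Proof.
  intros H1 H2 F r W Hx. apply in_app_or in Hx as [Hx|Hx].
  - destruct (H1 F r W Hx) as (W' & ?); exists W'; apply in_or_app; auto.
  - destruct (H2 F r W Hx) as (W' & ?); exists W'; apply in_or_app; auto.
Qed.

Lemma BackL_refl L : BackL L L.
Proof. apply BackL_incl; auto. Qed.
Lemma CovL_refl L : CovL L L.
Proof. apply CovL_incl; auto. Qed.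

Lemma Rel_empty V R : Rel (AB V [] :: R) R.
Proof.
  intros HC. apply compatL_cons in HC as (_ & _ & H). split; [|split]; auto.
  - apply BackL_incl. simpl; auto.
  - apply CovL_incl. simpl; auto.
Qed.

Lemma Rel_in V TD TD' R :
  (compatL TD -> compatL TD' /\ BackL (vs TD') (vs TD) /\ CovL (vs TD) (vs TD')) ->
  Rel (AB V TD :: R) (AB V TD' :: R).
Proof.
  intros IH HC. apply compatL_cons in HC as (H1 & H2 & H3). apply CI_AB_iff in H1.
  destruct (IH H1) as (A & B & C).
  assert (HB : BackL (views (AB V TD')) (views (AB V TD))) by (apply BackL_AB; auto).
  split; [|split].
  - apply compatL_cons; split; [|split]; auto.
    + apply CI_AB_iff; auto.
    + intros b Hb. eapply icompat_back; [apply (H2 b Hb)|auto|apply BackL_refl].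
  - simpl. apply BackL_app; auto. apply BackL_refl.
  - simpl. apply CovL_app; [apply CovL_AB; auto|apply CovL_refl].
Qed.

Lemma BackL_mono_r L' L L2 : BackL L' L -> (forall x, In x L -> In x L2) -> BackL L' L2.
Proof. intros H1 H2; eapply BackL_trans; [eauto|apply BackL_incl; auto]. Qed.
Lemma BackL_mono_l L0 L' L : BackL L' L -> (forall x, In x L0 -> In x L') -> BackL L0 L.
Proof. intros H1 H2; eapply BackL_trans; [apply BackL_incl; eauto|auto]. Qed.
Lemma CovL_mono_l L0 L L' : CovL L L' -> (forall x, In x L0 -> In x L) -> CovL L0 L'.
Proof. intros H1 H2; eapply CovL_trans; [apply CovL_incl; eauto|auto]. Qed.
Lemma CovL_mono_r L L' L2 : CovL L L' -> (forall x, In x L' -> In x L2) -> CovL L L2.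
Proof. intros H1 H2; eapply CovL_trans; [eauto|apply CovL_incl; auto]. Qed.

Definition MergeP (a : aitem) := forall b, item_eq (erase a) (erase b) -> CI a -> CI b -> icompat a b ->
  exists m, erase m = erase a /\ CI m /\ BackL (views m) (views a ++ views b) /\
    CovL (views a ++ views b) (views m).

Lemma merge_list T : (forall a, In a T -> MergeP a) -> forall Tb,
  Forall2 item_eq (map erase T) (map erase Tb) -> compatL T -> compatL Tb ->
  (forall a b, In a T -> In b Tb -> icompat a b) ->
  exists M, map erase M = map erase T /\ compatL M /\ BackL (vs M) (vs T ++ vs Tb) /\
    CovL (vs T ++ vs Tb) (vs M).
Proof.
  induction T as [|a T IH]; intros HM Tb HF HT HTb Hx.
  - destruct Tb; inversion HF. exists []; simpl; split; auto; split; [apply compatL_nil|].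
    split; [intros x []|intros ? ? ? []].
  - destruct Tb as [|b Tb]; inversion HF as [|? ? ? ? Hab HF']; subst.
    apply compatL_cons in HT as (Ca & Ia & CT). apply compatL_cons in HTb as (Cb & Ib & CTb).
    destruct (HM a (or_introl eq_refl) b Hab Ca Cb (Hx a b (or_introl eq_refl) (or_introl eq_refl)))
      as (m & Em & Cm & Bm & Vm).
    destruct (IH (fun a' H => HM a' (or_intror H)) Tb HF' CT CTb
      (fun a' b' Ha Hb => Hx a' b' (or_intror Ha) (or_intror Hb))) as (M & EM & CM & BM & VM).
    exists (m :: M). split; [simpl; congruence|]. split; [|split].
    + apply compatL_cons; split; [|split]; auto.
      intros m' Hm'. apply (icompat_backL m m' (views a ++ views b) (vs T ++ vs Tb)); [exact Bm| |].
      * eapply BackL_mono_l; [apply BM|]. intros; apply in_vs; exists m'; auto.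
      * intros x y Hx' Hy'. apply in_app_or in Hx' as [Hx'|Hx']; apply in_app_or in Hy' as [Hy'|Hy'];
        apply in_vs in Hy' as (c & Hc & Hy').
        -- apply (Ia c Hc); auto.
        -- apply (Hx a c (or_introl eq_refl) (or_intror Hc)); auto.
        -- apply cond_sym. apply (Hx c b (or_intror Hc) (or_introl eq_refl)); auto.
        -- apply (Ib c Hc); auto.
    + simpl. intros x Hx'. apply in_app_or in Hx' as [Hx'|Hx'].
      * destruct (Bm x Hx') as (y & Hy & S). exists y; split; auto.
        apply in_app_or in Hy as [Hy|Hy]; apply in_or_app; [left|right]; apply in_or_app; auto.
      * destruct (BM x Hx') as (y & Hy & S). exists y; split; auto.
        apply in_app_or in Hy as [Hy|Hy]; apply in_or_app; [left|right]; apply in_or_app; auto.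
    + simpl. intros F r W Hx'. apply in_app_or in Hx' as [Hx'|Hx']; apply in_app_or in Hx' as [Hx'|Hx'].
      * destruct (Vm F r W) as (W' & ?); [apply in_or_app; auto|]. exists W'; apply in_or_app; auto.
      * destruct (VM F r W) as (W' & ?); [apply in_or_app; auto|]. exists W'; apply in_or_app; auto.
      * destruct (Vm F r W) as (W' & ?); [apply in_or_app; auto|]. exists W'; apply in_or_app; auto.
      * destruct (VM F r W) as (W' & ?); [apply in_or_app; auto|]. exists W'; apply in_or_app; auto.
Qed.

Lemma merge a : MergeP a.
Proof.
  induction a as [F rs|V T IH] using aitem_ind'; intros b Hab Ca Cb Iab.
  - simpl in Hab. inversion Hab as [F1 E1 E2|]; subst.
    destruct b as [F2 rs2|V2 T2]; simpl in E2; inversion E2 as [E3]; subst F2.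
    assert (HV : views (AF F (rs ++ rs2)) = views (AF F rs) ++ views (AF F rs2)) by (simpl; apply map_app).
    exists (AF F (rs ++ rs2)). split; auto. split; [|split].
    + apply CI_AF_iff. apply CI_AF_iff in Ca. apply CI_AF_iff in Cb.
      intros x y Hx Hy. rewrite HV in Hx, Hy.
      apply in_app_or in Hx as [Hx|Hx]; apply in_app_or in Hy as [Hy|Hy]; auto.
      apply cond_sym; auto.
    + rewrite HV; apply BackL_refl.
    + rewrite HV; apply CovL_refl.
  - simpl in Hab. inversion Hab as [|V0 V' G0 G' G'' HV HP HF]; subst.
    destruct b as [F2 rs2|V2 T2]; simpl in H1; inversion H1; subst.
    destruct (Permutation_map_inv erase T2 (Permutation_sym HP)) as (T3 & -> & HP3).
    apply CI_AB_iff in Ca. apply CI_AB_iff in Cb.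
    assert (C3 : compatL T3) by (eapply compatL_perm; eauto).
    assert (Hx : forall t t', In t T -> In t' T3 -> icompat t t').
    { intros t t' Ht Ht' x y Hx Hy.
      eapply cond_mono; [apply (Iab (pre V x) (pre V2 y))| apply sv_pre_r| apply sv_pre_r].
      - apply in_views_AB; eauto.
      - apply in_views_AB. exists y, t'; split; auto. eapply Permutation_in; [symmetry|]; eauto. }
    destruct (merge_list T IH T3 HF Ca C3 Hx) as (M & EM & CM & BM & VM).
    exists (AB V M). split; [simpl; congruence|]. split; [|split].
    + apply CI_AB_iff; auto.
    + intros x Hxx. apply in_views_AB in Hxx as (x0 & m & Hm & Hx0 & ->).
      destruct (BM x0) as (y0 & Hy0 & S); [apply in_vs; eauto|].
      apply in_app_or in Hy0 as [Hy0|Hy0].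
      * exists (pre V y0). split; [apply in_or_app; left; simpl; apply in_map; auto|].
        apply sv_pre2; auto.
      * exists (pre V2 y0). split.
        -- apply in_or_app; right; simpl; apply in_map. eapply Permutation_in; [|eauto].
           symmetry; apply vs_perm; auto.
        -- apply sv_pre2; auto. intros v; apply HV.
    + intros F r W Hxx. apply in_app_or in Hxx as [Hxx|Hxx]; simpl in Hxx;
      apply in_map_iff in Hxx as ([F0 r0 W0] & E & Hx0); simpl in E; inversion E; subst.
      * destruct (VM F r W0) as (W' & HW'); [apply in_or_app; auto|].
        exists (V ++ W'). simpl. apply in_map_iff. exists (mkv F r W'); auto.
      * destruct (VM F r W0) as (W' & HW').
        { apply in_or_app; right. eapply Permutation_in; [apply vs_perm|]; eauto. }
        exists (V ++ W'). simpl. apply in_map_iff. exists (mkv F r W'); auto.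
Qed.

Lemma map_split {A B} (f : A -> B) T G1 x G2 : map f T = G1 ++ x :: G2 ->
  exists T1 a T2, T = T1 ++ a :: T2 /\ map f T1 = G1 /\ f a = x /\ map f T2 = G2.
Proof.
  intros H. apply map_eq_app in H as (T1 & T' & -> & H1 & H2).
  apply map_eq_cons in H2 as (a & T2 & -> & H3 & H4). exists T1, a, T2; auto.
Qed.

Lemma erase_IB a V D : erase a = IB V D -> exists TD, a = AB V TD /\ map erase TD = D.
Proof. destruct a; simpl; intros H; inversion H; subst; eauto. Qed.

Lemma perm2 {A} (T1 T2 : list A) x y : Permutation (T1 ++ x :: y :: T2) (x :: y :: T1 ++ T2).
Proof.
  eapply perm_trans; [apply Permutation_sym, Permutation_middle|]. constructor.
  apply Permutation_sym, Permutation_middle.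
Qed.

Definition RelX T T' := compatL T' /\ BackL (vs T') (vs T) /\ CovL (vs T) (vs T').

Lemma cstep_ann G G' : cstep G G' -> forall T, map erase T = G -> compatL T ->
  exists T', map erase T' = G' /\ RelX T T'.
Proof.
  induction 1 as [G1 G2 V D1 D2 I HV|G1 G2 V|G1 G2 G3 I J Hij|G1 G2 V D D' Hs IH];
    intros T ET CT.
  - apply map_split in ET as (T1 & a & T2 & -> & E1 & Ea & E2).
    apply erase_IB in Ea as (TD & -> & ED).
    apply map_split in ED as (TD1 & aI & TD2 & -> & F1 & Fa & F2).
    exists (T1 ++ aI :: AB V (TD1 ++ TD2) :: T2). split.
    + rewrite map_app; simpl; rewrite map_app; congruence.
    + revert CT. apply (Rel_perm _ _ (AB V (TD1 ++ aI :: TD2) :: T1 ++ T2) (aI :: AB V (TD1 ++ TD2) :: T1 ++ T2)).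
      * apply Permutation_sym, Permutation_middle.
      * apply perm2.
      * eapply Rel_trans; [apply Rel_AB_perm, Permutation_sym, Permutation_middle|].
        apply Rel_pull. subst; auto.
  - apply map_split in ET as (T1 & a & T2 & -> & E1 & Ea & E2).
    apply erase_IB in Ea as (TD & -> & ED). destruct TD; [|discriminate].
    exists (T1 ++ T2). split; [rewrite map_app; congruence|].
    revert CT. apply (Rel_perm _ _ (AB V [] :: T1 ++ T2) (T1 ++ T2)).
    * apply Permutation_sym, Permutation_middle.
    * auto.
    * apply Rel_empty.
  - apply map_split in ET as (T1 & aI & T2' & -> & E1 & Ea & E2).
    apply map_split in E2 as (T2 & aJ & T3 & -> & F1 & Fa & F2).
    assert (CT' : compatL (aI :: aJ :: T1 ++ T2 ++ T3)).
    { eapply compatL_perm; [|apply CT].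
      eapply perm_trans; [apply Permutation_sym, Permutation_middle|]. constructor.
      rewrite app_assoc. eapply perm_trans; [apply Permutation_sym, Permutation_middle|].
      rewrite app_assoc; auto. }
    apply compatL_cons in CT' as (Ca & Ia & CT2). apply compatL_cons in CT2 as (Cb & Ib & CR).
    destruct (merge aI aJ) as (m & Em & Cm & Bm & Vm); subst; auto.
    { apply Ia; left; auto. }
    exists (T1 ++ m :: T2 ++ T3). split.
    + rewrite !map_app; simpl; rewrite map_app; congruence.
    + assert (P1 : Permutation (T1 ++ aI :: T2 ++ aJ :: T3) (aI :: aJ :: T1 ++ T2 ++ T3)).
      { eapply perm_trans; [apply Permutation_sym, Permutation_middle|]. constructor.
        rewrite app_assoc. eapply perm_trans; [apply Permutation_sym, Permutation_middle|].
        rewrite app_assoc; auto. }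
      assert (P2 : Permutation (T1 ++ m :: T2 ++ T3) (m :: T1 ++ T2 ++ T3))
        by (apply Permutation_sym, Permutation_middle).
      revert CT. apply (Rel_perm _ _ _ _ P1 P2). intros _.
      split; [|split].
      * apply compatL_cons; split; [|split]; auto.
        intros r Hr. apply (icompat_backL m r (views aI ++ views aJ) (views r)); auto.
        -- apply BackL_refl.
        -- intros x y Hx Hy. apply in_app_or in Hx as [Hx|Hx].
           ++ apply (Ia r (or_intror Hr)); auto.
           ++ apply (Ib r Hr); auto.
      * change (BackL (views m ++ vs (T1 ++ T2 ++ T3)) (views aI ++ views aJ ++ vs (T1 ++ T2 ++ T3))).
        rewrite (app_assoc (views aI)). apply BackL_app; auto. apply BackL_refl.
      * change (CovL (views aI ++ views aJ ++ vs (T1 ++ T2 ++ T3)) (views m ++ vs (T1 ++ T2 ++ T3))).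
        rewrite (app_assoc (views aI)). apply CovL_app; auto. apply CovL_refl.
  - apply map_split in ET as (T1 & a & T2 & -> & E1 & Ea & E2).
    apply erase_IB in Ea as (TD & -> & ED).
    assert (CT' : compatL (AB V TD :: T1 ++ T2)).
    { eapply compatL_perm; [|apply CT]. apply Permutation_sym, Permutation_middle. }
    pose proof CT' as CT''. apply compatL_cons in CT'' as (C1 & _ & _). apply CI_AB_iff in C1.
    destruct (IH TD ED C1) as (TD' & ED' & RX).
    exists (T1 ++ AB V TD' :: T2). split.
    + rewrite map_app; simpl; congruence.
    + revert CT. apply (Rel_perm _ _ (AB V TD :: T1 ++ T2) (AB V TD' :: T1 ++ T2)).
      * apply Permutation_sym, Permutation_middle.
      * apply Permutation_sym, Permutation_middle.
      * apply Rel_in. intros _; auto.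
Qed.

Lemma RelX_trans T1 T2 T3 : RelX T1 T2 -> RelX T2 T3 -> RelX T1 T3.
Proof.
  intros (A1 & B1 & C1) (A2 & B2 & C2). split; [|split]; auto.
  eapply BackL_trans; eauto. eapply CovL_trans; eauto.
Qed.

Lemma rt_ann G G' : clos_refl_trans ctx cstep G G' -> forall T, map erase T = G -> compatL T ->
  exists T', map erase T' = G' /\ RelX T T'.
Proof.
  induction 1 as [G G' Hs|G|G1 G2 G3 H1 IH1 H2 IH2]; intros T ET CT.
  - eapply cstep_ann; eauto.
  - exists T; split; auto. split; [|split]; auto. apply BackL_refl. apply CovL_refl.
  - destruct (IH1 T ET CT) as (T2 & E2 & R2). destruct (IH2 T2 E2 (proj1 R2)) as (T3 & E3 & R3).
    exists T3; split; auto. eapply RelX_trans; eauto.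
Qed.

Definition IeqP (a : aitem) := forall i, item_eq (erase a) i -> CI a ->
  exists a', erase a' = i /\ CI a' /\ BackL (views a') (views a) /\ CovL (views a) (views a').

Lemma ieq_list T : (forall a, In a T -> IeqP a) -> forall G'', Forall2 item_eq (map erase T) G'' ->
  compatL T -> exists T'', map erase T'' = G'' /\ RelX T T''.
Proof.
  induction T as [|a T IH]; intros HI G'' HF CT; inversion HF as [|? i ? G3 Hi HF']; subst.
  - exists []; split; auto. split; [apply compatL_nil|split; [intros x []|intros ? ? ? []]].
  - apply compatL_cons in CT as (Ca & Ia & CT).
    destruct (HI a (or_introl eq_refl) i Hi Ca) as (a' & Ea & Ca' & Ba & Va).
    destruct (IH (fun b Hb => HI b (or_intror Hb)) G3 HF' CT) as (T3 & E3 & C3 & B3 & V3).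
    exists (a' :: T3). split; [simpl; congruence|]. split; [|split].
    + apply compatL_cons; split; [|split]; auto. intros t Ht.
      apply (icompat_backL a' t (views a) (vs T)); auto.
      * eapply BackL_mono_l; [apply B3|]. intros; apply in_vs; eauto.
      * intros x y Hx Hy. apply in_vs in Hy as (c & Hc & Hy). apply (Ia c Hc); auto.
    + apply BackL_app; auto.
    + apply CovL_app; auto.
Qed.

Lemma ieq_ann a : IeqP a.
Proof.
  induction a as [F rs|V T IH] using aitem_ind'; intros i Hi Ca.
  - simpl in Hi. inversion Hi; subst. exists (AF F rs); split; auto. split; auto.
    split; [apply BackL_refl|apply CovL_refl].
  - simpl in Hi. inversion Hi as [|V0 V' G0 G' G'' HV HP HF]; subst.
    apply CI_AB_iff in Ca. destruct (ieq_list T IH G'' HF Ca) as (T3 & <- & C3 & B3 & V3).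
    destruct (Permutation_map_inv erase T3 HP) as (T4 & -> & HP4).
    exists (AB V' T4). split; auto. split; [|split].
    + apply CI_AB_iff. eapply compatL_perm; eauto.
    + apply BackL_AB. intros v; apply HV. eapply BackL_mono_l; [apply B3|].
      intros; eapply Permutation_in; [symmetry; apply vs_perm|]; eauto.
    + apply CovL_AB. eapply CovL_mono_r; [apply V3|].
      intros; eapply Permutation_in; [apply vs_perm|]; eauto.
Qed.

Lemma ctxeq_ann G N T : ctx_eq G N -> map erase T = G -> compatL T ->
  exists T', map erase T' = N /\ RelX T T'.
Proof.
  intros (G'' & HP & HF) ET CT. subst G.
  destruct (ieq_list T (fun a _ => ieq_ann a) G'' HF CT) as (T3 & <- & C3 & B3 & V3).
  destruct (Permutation_map_inv erase T3 HP) as (T4 & -> & HP4).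
  exists T4. split; auto. split; [|split].
  - eapply compatL_perm; eauto.
  - eapply BackL_mono_l; [apply B3|]. intros; eapply Permutation_in; [symmetry; apply vs_perm|]; eauto.
  - eapply CovL_mono_r; [apply V3|]. intros; eapply Permutation_in; [apply vs_perm|]; eauto.
Qed.

Lemma in_pre F r W V L : In (mkv F r W) L -> In (mkv F r (V ++ W)) (map (pre V) L).
Proof. intros H. apply in_map_iff. exists (mkv F r W); auto. Qed.

Lemma in_unpre F r W V L : In (mkv F r W) (map (pre V) L) -> exists W0, In (mkv F r W0) L.
Proof.
  intros H. apply in_map_iff in H as ([F0 r0 W0] & E & H). simpl in E. inversion E; subst. eauto.
Qed.

Lemma cond_shift V x y : cond (pre V y) x -> cond (pre V x) y.
Proof.
  destruct x as [Fx rx Wx], y as [Fy ry Wy]; simpl. intros H v1 v2 H1 H2 E.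
  destruct (H v2 v1 H2 H1 (eq_sym E)) as (-> & N1 & N2). split; [auto|split].
  - intros Hi; apply in_app_or in Hi as [Hi|Hi]; auto. apply N1; apply in_or_app; auto.
  - intros Hi; apply N1; apply in_or_app; auto.
Qed.

Lemma reroot V TD R : compatL (AB V TD :: R) -> compatL (AB V R :: TD).
Proof.
  intros H. apply compatL_cons in H as (H1 & H2 & H3). apply CI_AB_iff in H1.
  apply compatL_cons; split; [apply CI_AB_iff; auto|split; auto].
  intros t Ht x y Hx Hy. apply in_views_AB in Hx as (x0 & r & Hr & Hx0 & ->).
  apply cond_shift. apply (H2 r Hr); auto. apply in_views_AB; eauto.
Qed.

Definition SameFR L L' := CovL L L' /\ CovL L' L.

Lemma SameFR_trans L1 L2 L3 : SameFR L1 L2 -> SameFR L2 L3 -> SameFR L1 L3.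
Proof. intros [A B] [C D]; split; eapply CovL_trans; eauto. Qed.

Lemma SameFR_perm L L' : Permutation L L' -> SameFR L L'.
Proof.
  intros HP; split; apply CovL_incl; intros x Hx.
  - eapply Permutation_in; eauto.
  - eapply Permutation_in; [symmetry|]; eauto.
Qed.

Lemma focus_item a : forall accT Tj G F r W, Permutation G (erase a :: map erase Tj) ->
  In (mkv F r W) (views a) -> compatL (accT ++ a :: Tj) ->
  exists G0 T0 rs, lfocus (map erase accT) G F G0 W /\ map erase T0 = G0 /\ compatL T0 /\
    In (AF F rs) T0 /\ In r rs /\ SameFR (vs (accT ++ a :: Tj)) (vs T0).
Proof.
  induction a as [F' rs|V TD IH] using aitem_ind'; intros accT Tj G F r W HP Hv HC.
  - simpl in Hv. apply in_map_iff in Hv as (r' & E & Hr). inversion E; subst.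
    assert (P : Permutation (accT ++ AF F rs :: Tj) (accT ++ Tj ++ [AF F rs])).
    { apply Permutation_app_head. apply Permutation_cons_append. }
    exists (map erase accT ++ map erase Tj ++ [IF F]), (accT ++ Tj ++ [AF F rs]), rs.
    split; [apply lf_here; auto|]. split; [rewrite !map_app; auto|].
    split; [eapply compatL_perm; eauto|]. split; [apply in_or_app; right; apply in_or_app; right; left; auto|].
    split; auto. apply SameFR_perm, vs_perm; auto.
  - apply in_views_AB in Hv as ([F1 r1 W1] & a1 & Ha1 & Hx1 & E). simpl in E. inversion E; subst.
    destruct (in_split _ _ Ha1) as (TD1 & TD2 & ->).
    assert (HC' : compatL ([AB V (accT ++ Tj)] ++ a1 :: TD1 ++ TD2)).
    { simpl. eapply compatL_perm; [apply perm_skip, Permutation_sym, Permutation_middle|].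
      apply reroot. eapply compatL_perm; [|apply HC]. apply Permutation_sym, Permutation_middle. }
    assert (HP' : Permutation (map erase (TD1 ++ a1 :: TD2)) (erase a1 :: map erase (TD1 ++ TD2))).
    { rewrite !map_app. simpl. apply Permutation_sym, Permutation_middle. }
    destruct (IH a1 Ha1 [AB V (accT ++ Tj)] (TD1 ++ TD2) _ F1 r1 W1 HP' Hx1 HC')
      as (G0 & T0 & rs & HL & E0 & C0 & I0 & R0 & S0).
    exists G0, T0, rs. split; [|split; [auto|split; [auto|split; [auto|split; [auto|]]]]].
    + eapply lf_deeper; [apply HP|]. simpl in HL. rewrite map_app in HL. exact HL.
    + eapply SameFR_trans; [|apply S0]. split.
      * intros F r W Hx. rewrite vs_app in Hx. simpl in Hx.
        apply in_app_or in Hx as [Hx|Hx]; [|apply in_app_or in Hx as [Hx|Hx]].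
        -- exists (V ++ W). simpl. apply in_or_app; left. apply in_pre. rewrite vs_app. apply in_or_app; auto.
        -- destruct (in_unpre _ _ _ _ _ Hx) as (W0 & HW0). exists W0.
           apply in_or_app; right. eapply Permutation_in; [|apply HW0].
           exact (vs_perm (TD1 ++ a1 :: TD2) (a1 :: TD1 ++ TD2) (Permutation_sym (Permutation_middle _ _ _))).
        -- exists (V ++ W). simpl. apply in_or_app; left. apply in_pre. rewrite vs_app. apply in_or_app; auto.
      * intros F r W Hx. simpl in Hx. apply in_app_or in Hx as [Hx|Hx].
        -- destruct (in_unpre _ _ _ _ _ Hx) as (W0 & HW0). exists W0. rewrite vs_app in HW0 |- *.
           apply in_app_or in HW0 as [HW0|HW0]; apply in_or_app; [left; auto|right].
           simpl. apply in_or_app; right; auto.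
        -- exists (V ++ W). rewrite vs_app. apply in_or_app; right. simpl. apply in_or_app; left.
           apply in_pre. eapply Permutation_in; [|apply Hx].
           exact (vs_perm (a1 :: TD1 ++ TD2) (TD1 ++ a1 :: TD2) (Permutation_middle _ _ _)).
Qed.

(** * Formula occurrences in contexts *)
Definition AllBvc (G : ctx) := forall I B, In I G -> OccF B I -> bvc B.
Definition OccIn B (G : ctx) := exists I, In I G /\ OccF B I.

Lemma ieq_occ I J B : item_eq I J -> OccF B J -> OccF B I.
Proof.
  intros H HO; revert I H; induction HO as [|V G I' Hin HO IH]; intros I0 H.
  - inversion H; subst; constructor.
  - inversion H as [|V0 V' G0 G' G'' HV HP HF]; subst.
    destruct (Forall2_In_r _ _ _ _ HF (Permutation_in _ HP Hin)) as (I1 & HI1 & Hq).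
    econstructor; eauto.
Qed.

Lemma OccIn_app B G1 G2 : OccIn B (G1 ++ G2) <-> OccIn B G1 \/ OccIn B G2.
Proof.
  unfold OccIn; split.
  - intros (I & H & HO). apply in_app_or in H as [|]; eauto.
  - intros [(I & H & HO)|(I & H & HO)]; exists I; split; auto; apply in_or_app; auto.
Qed.

Lemma OccIn_cons B I G : OccIn B (I :: G) <-> OccF B I \/ OccIn B G.
Proof.
  unfold OccIn; split.
  - intros (J & [<-|H] & HO); eauto.
  - intros [H|(J & H & HO)]; [exists I; split; [left|]|exists J; split; [right|]]; auto.
Qed.

Lemma OccF_IB B V G : OccF B (IB V G) <-> OccIn B G.
Proof.
  split.
  - intros H; inversion H; subst; unfold OccIn; eauto.
  - intros (I & H & HO); econstructor; eauto.
Qed.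

Lemma cstep_occ G G' B : cstep G G' -> OccIn B G' -> OccIn B G.
Proof.
  induction 1 as [G1 G2 V D1 D2 I HV|G1 G2 V|G1 G2 G3 I J Hij|G1 G2 V D D' Hs IH]; intros H.
  - rewrite OccIn_app, OccIn_cons, OccIn_cons, OccF_IB, OccIn_app in H.
    rewrite OccIn_app, OccIn_cons, OccF_IB, OccIn_app, OccIn_cons. tauto.
  - rewrite OccIn_app in H. rewrite OccIn_app, OccIn_cons. tauto.
  - rewrite !OccIn_app, !OccIn_cons, !OccIn_app in H. rewrite !OccIn_app, !OccIn_cons, !OccIn_app, !OccIn_cons.
    destruct H as [H|[H|[H|H]]]; auto.
  - rewrite OccIn_app, OccIn_cons, OccF_IB in H. rewrite OccIn_app, OccIn_cons, OccF_IB. tauto.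
Qed.

Lemma rt_occ G G' B : clos_refl_trans ctx cstep G G' -> OccIn B G' -> OccIn B G.
Proof. induction 1; eauto using cstep_occ. Qed.

Lemma ctxeq_occ G N B : ctx_eq G N -> OccIn B N -> OccIn B G.
Proof.
  intros (G'' & HP & HF) (I & HI & HO).
  destruct (Forall2_In_r _ _ _ _ HF (Permutation_in _ HP HI)) as (I1 & HI1 & Hq).
  exists I1; split; auto. eapply ieq_occ; eauto.
Qed.

Lemma AllBvc_iff G : AllBvc G <-> forall B, OccIn B G -> bvc B.
Proof. unfold AllBvc, OccIn; split; intros H; [intros B (I & ? & ?)|intros I B ? ?]; eauto. Qed.

Lemma lfocus_occ acc G F res W B : lfocus acc G F res W -> OccIn B res -> OccIn B acc \/ OccIn B G.
Proof.
  induction 1 as [acc G F Gi HP|acc G F V D Gj res W HP HL IH]; intros H.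
  - rewrite !OccIn_app in H. destruct H as [H|[H|H]]; auto; right.
    + destruct H as (I & HI & HO). exists I; split; auto. eapply Permutation_in; [symmetry; eauto|]; right; auto.
    + destruct H as (I & [<-|[]] & HO). exists (IF F); split; auto. eapply Permutation_in; [symmetry; eauto|]; left; auto.
  - destruct (IH H) as [H1|H1].
    + rewrite OccIn_cons, OccF_IB, OccIn_app in H1. destruct H1 as [[H1|H1]|H1]; [auto| |destruct H1 as (? & [] & _)].
      right. destruct H1 as (I & HI & HO). exists I; split; auto. eapply Permutation_in; [symmetry; eauto|]; right; auto.
    + right. exists (IB V D); split. eapply Permutation_in; [symmetry; eauto|]; left; auto.
      apply OccF_IB; auto.
Qed.

Lemma view_occ a : forall F r W, In (mkv F r W) (views a) -> OccF F (erase a).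
Proof.
  induction a as [F0 rs|V T IH] using aitem_ind'; intros F r W H.
  - simpl in H. apply in_map_iff in H as (r' & E & _). inversion E; subst; constructor.
  - apply in_views_AB in H as ([F1 r1 W1] & a & Ha & Hx & E). simpl in E; inversion E; subst.
    simpl. econstructor; [apply in_map; eauto|]. eapply IH; eauto.
Qed.

Lemma vs_occ T F r W : In (mkv F r W) (vs T) -> OccIn F (map erase T).
Proof.
  intros H. apply in_vs in H as (a & Ha & H). exists (erase a); split; [apply in_map; auto|].
  eapply view_occ; eauto.
Qed.

Lemma goal_sub C rs T A r : compatL (AF C rs :: T) -> In r rs -> (forall v, free v A -> free v C) ->
  compatL (AF A [r] :: AF C rs :: T).
Proof.
  intros HC Hr HA. pose proof HC as HC'. apply compatL_cons in HC' as (C1 & I1 & _).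
  apply CI_AF_iff in C1.
  assert (Hw : svw (mkv A r []) (mkv C r [])) by (simpl; split; auto).
  assert (Hx : forall y, In y (views (AF A [r])) -> y = mkv A r []).
  { intros y Hy. simpl in Hy. destruct Hy as [<-|[]]; auto. }
  assert (Hc : In (mkv C r []) (views (AF C rs))) by (simpl; apply in_map_iff; eauto).
  apply compatL_cons; split; [|split]; auto.
  - apply CI_AF_iff. intros x y Hx1 Hy1. rewrite (Hx x Hx1), (Hx y Hy1).
    apply (cond_mono_w (mkv C r []) (mkv C r [])); [apply C1; auto|exact Hw|exact Hw].
  - intros b [<-|Hb] x y Hx1 Hy1; rewrite (Hx x Hx1).
    + apply (cond_mono_w (mkv C r []) y); [apply C1; auto|exact Hw|destruct y; simpl; split; auto].
    + apply (cond_mono_w (mkv C r []) y); [apply (I1 b Hb); auto|exact Hw|destruct y; simpl; split; auto].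
Qed.

Section Main.
Variable nf : ctx -> ctx.
Hypothesis Hnf : nf_strategy nf.

Lemma nf_ann G T : map erase T = G -> compatL T -> exists T', map erase T' = nf G /\ RelX T T'.
Proof.
  intros ET CT. destruct (proj1 Hnf G) as (G' & Hrt & Heq).
  destruct (rt_ann _ _ Hrt T ET CT) as (T1 & E1 & R1).
  destruct (ctxeq_ann _ _ _ Heq E1 (proj1 R1)) as (T2 & E2 & R2).
  exists T2; split; auto. eapply RelX_trans; eauto.
Qed.

Lemma nf_bvc G : AllBvc G -> AllBvc (nf G).
Proof.
  rewrite !AllBvc_iff. intros H B HB. destruct (proj1 Hnf G) as (G' & Hrt & Heq).
  apply H. eapply rt_occ; eauto. eapply ctxeq_occ; eauto.
Qed.

Definition CovG (Γ : list form) T := forall F', In F' Γ -> exists F r W, In (mkv F r W) (vs T) /\ aF r [] [] F' F.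
Definition BkG T (Γ : list form) := forall F r W, In (mkv F r W) (vs T) -> exists F', In F' Γ /\ aF r [] [] F' F.

Definition Good Γ C' G C0 := exists T r0, map erase T = G /\ aF r0 [] [] C' C0 /\
  compatL (AF C0 [r0] :: T) /\ CovG Γ T /\ BkG T Γ.

Lemma good_transport Γ C' C0 T r0 : aF r0 [] [] C' C0 -> compatL (AF C0 [r0] :: T) ->
  CovG Γ T -> BkG T Γ -> Good Γ C' (nf (map erase T)) C0.
Proof.
  intros HA HC HCov HBk. pose proof HC as HC'. apply compatL_cons in HC' as (_ & _ & CT).
  destruct (nf_ann _ T eq_refl CT) as (T' & E' & CC' & B' & V').
  exists T', r0. split; auto. split; auto. split; [|split].
  - apply (compatL_replace [AF C0 [r0]] T T'); auto.
  - intros F' HF'. destruct (HCov F' HF') as (F & r & W & Hv & Ha).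
    destruct (V' F r W Hv) as (W' & Hv'). eauto.
  - intros F r W Hv. destruct (B' _ Hv) as ([F0 r0' W0] & Hy & ((E1 & _) & E2)).
    simpl in E1, E2; subst. eapply HBk; eauto.
Qed.

Lemma normal_nil : normal [].
Proof.
  intros G' H. inversion H; subst; match goal with E : _ ++ _ = [] |- _ => apply app_eq_nil in E as [_ E]; discriminate end.
Qed.

Lemma main Γ C' : ljp Γ C' -> forall G C0, normal G -> AllBvc G -> bvc C0 -> Good Γ C' G C0 ->
  ljb nf G C0.
Proof.
  induction 1 as [Γ As' p ts' Hin Hprem IH|Γ x' A'' Hfr Hd IH|Γ A' B' Hd IH|Γ A A' Hal Hd IH|Γ Γ' A HF Hd IH];
    intros G C0 HN HB HC0 (T & r0 & ET & HA & CT & HCov & HBk).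
  -
    inversion HA as [l1 l2 p0 ts0 us0 Hts| |]; subst.
    destruct (HCov _ Hin) as (F & r & W & Hv & HaF).
    destruct (aF_chain _ _ _ _ HaF) as (As & P & -> & HAs & HP).
    inversion HP as [l1 l2 p1 ts1 us Hts1| |]; subst.
    pose proof CT as CT'. apply compatL_cons in CT' as (CI0 & I0 & CT1).
    apply in_vs in Hv as (a & Ha & Hv).
    assert (Hcond : cond (mkv (Atom p us0) r0 []) (mkv (chain As (Atom p us)) r W)).
    { apply (I0 a Ha); simpl; auto. }
    simpl in Hcond.
    assert (Eu : us0 = us).
    { eapply Forall2_aT_nil_eq; eauto. intros v1 v2 H1 H2 E.
      apply (Hcond v1 v2); auto. apply free_chain_P; simpl; auto. }
    subst us0.
    assert (HW : forall x, In x W -> ~ free x (Atom p us)).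
    { intros x Hx Hf. assert (E : r0 x = r x) by (eapply Forall2_aT_nil_same; eauto).
      destruct (Hcond x x Hf (free_chain_P _ _ _ Hf) E) as (_ & _ & N). auto. }
    destruct (in_split _ _ Ha) as (T1 & T2 & ->).
    assert (HPm : Permutation (map erase (T1 ++ a :: T2)) (erase a :: map erase (T1 ++ T2))).
    { rewrite !map_app. simpl. apply Permutation_sym, Permutation_middle. }
    assert (HCa : compatL ([] ++ a :: T1 ++ T2)).
    { simpl. eapply compatL_perm; [|apply CT1]. apply Permutation_sym, Permutation_middle. }
    destruct (focus_item a [] (T1 ++ T2) _ _ _ _ HPm Hv HCa) as (G0 & T0 & rs & HL & E0 & C0 & Irs & Rr & S0).
    assert (HbF : bvc (chain As (Atom p us))).
    { apply (proj1 (AllBvc_iff _) HB). eapply vs_occ. apply in_vs. exists a; split; eauto. }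
    eapply ljb_L with (As := As) (G0 := G0) (W := W).
    + split; [auto|split; auto].
    + exact HL.
    + exact HW.
    + intros Ai HAi. destruct (Forall2_In_r _ _ _ _ HAs HAi) as (Ai' & HAi' & HaAi).
      apply (IH Ai' HAi').
      * apply (proj1 (proj2 Hnf)).
      * apply nf_bvc. apply AllBvc_iff. intros B HOB. destruct (lfocus_occ _ _ _ _ _ _ HL HOB) as [H1|H1].
        -- destruct H1 as (? & [] & _).
        -- apply (proj1 (AllBvc_iff _) HB); auto.
      * eapply bvc_chain; eauto.
      * subst G0. destruct (in_split _ _ Irs) as (R1 & R2 & ER).
        apply (good_transport Γ Ai' Ai T0 r).
        -- exact HaAi.
        -- assert (CR : compatL (AF (chain As (Atom p us)) rs :: R1 ++ R2)).
           { eapply compatL_perm; [|apply C0]. rewrite ER. apply Permutation_sym, Permutation_middle. }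
           pose proof (goal_sub _ _ _ Ai r CR Rr (fun v Hv => free_chain_A _ _ _ _ HAi Hv)) as CG.
           eapply compatL_perm; [|apply CG]. constructor. rewrite ER. apply Permutation_middle.
        -- intros F' HF'. destruct (HCov F' HF') as (F1 & r1 & W1 & Hv1 & Ha1).
           destruct (proj1 S0 F1 r1 W1) as (W2 & HW2).
           { eapply Permutation_in; [|apply Hv1]. apply vs_perm. apply Permutation_sym, Permutation_middle. }
           eauto.
        -- intros F1 r1 W1 Hv1. destruct (proj2 S0 F1 r1 W1 Hv1) as (W2 & HW2).
           eapply HBk. eapply Permutation_in; [|apply HW2]. apply vs_perm. apply Permutation_middle.
  -
    inversion HA as [| |l1 l2 x0 x A0 A HA0]; subst.
    apply ljb_Rall; [split; [auto|split; auto]|].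
    set (V := bound (All x A)).
    apply IH.
    + apply (proj1 (proj2 Hnf)).
    + apply nf_bvc. apply AllBvc_iff. intros B HOB. apply OccIn_cons in HOB as [HOB|(? & [] & _)].
      apply OccF_IB in HOB. apply (proj1 (AllBvc_iff _) HB); auto.
    + eapply bvc_all; eauto.
    + replace [IB V (map erase T)] with (map erase [AB V T]) by reflexivity.
      apply (good_transport Γ A'' A [AB V T] (upd r0 x x')).
      * apply (aF_bind r0 A'' A [] [] x' x eq_refl HA0).
      * assert (Hfx : forall v, v <> x -> free v A -> r0 v <> x').
        { intros v Hne Hv E. destruct (aF_free _ _ _ _ _ v HA) as [H1 _]; [simpl; auto|simpl; auto|].
          simpl in H1. destruct H1; auto. }
        pose proof CT as CT'. apply compatL_cons in CT' as (C1 & I1 & CT1).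
        apply CI_AF_iff in C1.
        assert (Cself : cond (mkv (All x A) r0 []) (mkv (All x A) r0 [])) by (apply C1; simpl; auto).
        apply compatL_cons; split; [|split].
        -- apply CI_AF_iff. intros u w Hu Hw. simpl in Hu, Hw.
           destruct Hu as [<-|[]]; destruct Hw as [<-|[]]. simpl.
           intros v1 v2 H1 H2 E. split; [|simpl; auto]. unfold upd in E.
           destruct (Nat.eqb_spec v1 x), (Nat.eqb_spec v2 x); subst; auto.
           ++ exfalso; apply (Hfx v2); auto.
           ++ exfalso; apply (Hfx v1); auto.
           ++ destruct (Cself v1 v2) as (? & _); simpl; auto.
        -- intros b [<-|[]] u w Hu Hw. simpl in Hu. destruct Hu as [<-|[]].
           apply in_views_AB in Hw as ([F r W] & t & Ht & Hw0 & ->). simpl.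
           intros v1 v2 H1 H2 E. unfold upd in E. destruct (Nat.eqb_spec v1 x).
           ++ subst v1. exfalso. destruct (HBk F r W) as (F' & HF' & HaF').
              { apply in_vs; eauto. }
              destruct (aF_free _ _ _ _ _ v2 HaF' H2) as [H3 _]; [simpl; auto|].
              apply (Hfr F' HF'). rewrite E; auto.
           ++ assert (Hc : cond (mkv (All x A) r0 []) (mkv F r W)) by (apply (I1 t Ht); simpl; auto).
              simpl in Hc. destruct (Hc v1 v2) as (<- & _ & N); auto.
              split; auto. split; auto. intros Hi.
              assert (Hi' : In v1 (bound (All x A) ++ W)) by exact Hi.
              apply in_app_or in Hi' as [Hi'|Hi']; auto.
              apply (bvc_free _ v1 HC0); simpl; auto.
        -- apply compatL_cons; split; [apply CI_AB_iff; auto|split; [intros _ []|apply compatL_nil]].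
      * intros F' HF'. destruct (HCov F' HF') as (F1 & r1 & W1 & Hv1 & Ha1).
        exists F1, r1, (V ++ W1). split; auto.
        change (In (mkv F1 r1 (V ++ W1)) (map (pre V) (vs T) ++ [])). rewrite app_nil_r. apply in_pre; auto.
      * intros F1 r1 W1 Hv1. change (In (mkv F1 r1 W1) (map (pre V) (vs T) ++ [])) in Hv1. rewrite app_nil_r in Hv1.
        destruct (in_unpre _ _ _ _ _ Hv1) as (W0 & HW0). eauto.
  -
    inversion HA as [|l1 l2 A0 B0 A B HA0 HB0|]; subst.
    apply bvc_imp in HC0 as HAB. destruct HAB as [HbA HbB].
    apply ljb_Rimp; [split; [auto|split; auto]|].
    apply IH.
    + apply (proj1 (proj2 Hnf)).
    + apply nf_bvc. apply AllBvc_iff. intros B1 HOB. apply OccIn_app in HOB as [HOB|HOB].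
      * apply (proj1 (AllBvc_iff _) HB); auto.
      * destruct HOB as (I & [<-|[]] & HO). inversion HO; subst; auto.
    + auto.
    + replace (map erase T ++ [IF A]) with (map erase (T ++ [AF A [r0]])) by (rewrite map_app; reflexivity).
      apply (good_transport (A' :: Γ) B' B (T ++ [AF A [r0]]) r0); auto.
      * pose proof (goal_sub _ _ _ A r0 CT (or_introl eq_refl) (fun v Hv => or_introl Hv)) as G1.
        assert (G2 : compatL (AF (Imp A B) [r0] :: AF A [r0] :: T)) by (eapply compatL_perm; [apply perm_swap|auto]).
        pose proof (goal_sub _ _ _ B r0 G2 (or_introl eq_refl) (fun v Hv => or_intror Hv)) as G3.
        assert (G4 : compatL (AF (Imp A B) [r0] :: AF B [r0] :: AF A [r0] :: T)) by (eapply compatL_perm; [apply perm_swap|auto]).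
        apply compatL_cons in G4 as (_ & _ & G5).
        eapply compatL_perm; [|apply G5]. constructor. apply Permutation_cons_append.
      * intros F' [<-|HF'].
        -- exists A, r0, []. split; auto. rewrite vs_app. apply in_or_app; right; simpl; auto.
        -- destruct (HCov F' HF') as (F1 & r1 & W1 & Hv1 & Ha1). exists F1, r1, W1.
           rewrite vs_app. split; auto. apply in_or_app; auto.
      * intros F1 r1 W1 Hv1. rewrite vs_app in Hv1. apply in_app_or in Hv1 as [Hv1|Hv1].
        -- destruct (HBk _ _ _ Hv1) as (F' & ? & ?). exists F'; split; [right|]; auto.
        -- simpl in Hv1. destruct Hv1 as [E|[]]. inversion E; subst. exists A'; split; [left|]; auto.
  -
    apply IH; auto. exists T, r0. split; auto. split; [eapply aF_compose; eauto|split; auto].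
  -
    apply IH; auto. exists T, r0. split; auto. split; auto. split; auto. split.
    + intros F HFin. destruct (Forall2_In_l _ _ _ _ HF HFin) as (F'' & HF'' & Hal).
      destruct (HCov F'' HF'') as (F1 & r1 & W1 & Hv1 & Ha1). exists F1, r1, W1. split; auto.
      eapply aF_compose; eauto.
    + intros F1 r1 W1 Hv1. destruct (HBk F1 r1 W1 Hv1) as (F'' & HF'' & Ha1).
      destruct (Forall2_In_r _ _ _ _ HF HF'') as (F & HFin & Hal). exists F; split; auto.
      eapply aF_compose; eauto.
Qed.

End Main.

Theorem proposition8 (nf : ctx -> ctx) (A : form) :
  nf_strategy nf -> pos A -> bvc A -> ljp [] A -> ljb nf [] A.
Proof.
  intros Hnf _ Hb Hd. apply (main nf Hnf [] A Hd [] A normal_nil).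
  - intros I B [] _.
  - auto.
  - exists [], (fun v => v). split; auto. split; [apply aF_refl|]. split; [|split].
    + apply compatL_cons; split; [|split; [intros _ []|apply compatL_nil]].
      apply CI_AF_iff. intros u w [<-|[]] [<-|[]]. simpl. intros; split; auto.
    + intros F' [].
    + intros F r W [].
Qed.
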